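(* Let $X$ be a finitely presented group. Then the deficiency of the one-object groupoid $\Sigma(X)$, taken with respect to presentations by groupoidal computads, equals the classical deficiency of $X$.
   Context: Classical deficiency of a group. For a finite group presentation $\langle S\mid R\rangle$ (finite generating set $S$, finite set $R$ of relations), its deficiency is $|S|-|R|$. The deficiency of a finitely presented group $X$ is the maximum of $|S|-|R|$ over all finite presentations of $X$. Suspension. $\Sigma(X)$ is the groupoid with one object whose endomorphism group is $X$. Groupoidal computads. - A small graph $G$ consists of a set of objects, a set of arrows, and domain and codomain maps. $\mathcal{L}_1\mathcal{F}_1(G)$ is the free groupoid on $G$. - A small groupoidal computad $(G,\mathfrak{g}_2,s,t)$ is a set $\mathfrak{g}_2$ together with, for each $\alpha\in\mathfrak{g}_2$, parallel morphisms $s(\alpha),t(\alpha)$ of $\mathcal{L}_1\mathcal{F}_1(G)$. - It presents a groupoid $Y$ if $Y$ is isomorphic to the quotient of $\mathcal{L}_1\mathcal{F}_1(G)$ by the relations $s(\alpha)=t(\alpha)$. - It is connected if $G$ is connected. Deficiency with respect to groupoidal computads. Let $\chi$ denote the real Euler characteristic, and let $\mathcal{F}_{\mathrm{Top}_1}(G)$ be the topological realization of $G$. - A presentation with $\chi(\mathcal{F}_{\mathrm{Top}_1}(G))\in\mathbb{Z}$ and $\mathfrak{g}_2$ finite has deficiency $1-|\mathfrak{g}_2|-\chi(\mathcal{F}_{\mathrm{Top}_1}(G))$. - The deficiency of a groupoid $Y$ is the maximum of these numbers over all small connected groupoidal computads presenting $Y$. *)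

(* Defs.v *)
From Stdlib Require Import Reals ZArith List ClassicalEpsilon.
From Stdlib Require Fin.
Import ListNotations.
Set Implicit Arguments.
Unset Strict Implicit.

Record group := Group {
  gcar :> Type;
  gmul : gcar -> gcar -> gcar;
  gone : gcar;
  ginv : gcar -> gcar;
  gmulA : forall x y z, gmul x (gmul y z) = gmul (gmul x y) z;
  gmul1l : forall x, gmul gone x = x;
  gmul1r : forall x, gmul x gone = x;
  gmulVl : forall x, gmul (ginv x) x = gone;
  gmulVr : forall x, gmul x (ginv x) = gone }.

(* Classical finite presentations <S | R> with S = Fin.t n and R a     *)
(* finite set (duplicate-free list) of relators, i.e. words in S^{+-1} *)
Definition word (n : nat) := list (Fin.t n * bool).

Inductive gcong (n : nat) (R : list (word n)) : word n -> word n -> Prop :=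
| gc_refl u : gcong R u u
| gc_sym u v : gcong R u v -> gcong R v u
| gc_trans u v w : gcong R u v -> gcong R v w -> gcong R u w
| gc_cancel u x b v : gcong R (u ++ (x, b) :: (x, negb b) :: v) (u ++ v)
| gc_rel u r v : In r R -> gcong R (u ++ r ++ v) (u ++ v).

(* X is isomorphic to F(S)/<<R>>: there is a homomorphism from words   *)
(* onto X whose kernel congruence is exactly gcong R.                 *)
Definition is_presentation (X : group) (n : nat) (R : list (word n)) : Prop :=
  NoDup R /\
  exists F : word n -> X,
    F [] = gone X /\
    (forall u v, F (u ++ v) = gmul (F u) (F v)) /\
    (forall x : X, exists u, F u = x) /\
    (forall u v, F u = F v <-> gcong R u v).

Definition finitely_presented (X : group) : Prop :=
  exists n (R : list (word n)), is_presentation X R.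

Definition classical_deficiencies (X : group) (d : Z) : Prop :=
  exists n (R : list (word n)),
    is_presentation X R /\ d = (Z.of_nat n - Z.of_nat (length R))%Z.

Definition IsGreatest (P : Z -> Prop) (d : Z) : Prop :=
  P d /\ forall d', P d' -> (d' <= d)%Z.

(* Groupoids and the suspension Sigma(X).  Composition is diagrammatic *)
Record groupoid := Groupoid {
  gobj : Type;
  ghom : gobj -> gobj -> Type;
  gcomp : forall a b c, ghom a b -> ghom b c -> ghom a c;
  gid : forall a, ghom a a;
  gginv : forall a b, ghom a b -> ghom b a;
  gcompA : forall a b c d (f : ghom a b) (g : ghom b c) (h : ghom c d),
      gcomp f (gcomp g h) = gcomp (gcomp f g) h;
  gcomp1l : forall a b (f : ghom a b), gcomp (gid a) f = f;
  gcomp1r : forall a b (f : ghom a b), gcomp f (gid b) = f;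
  gcompVl : forall a b (f : ghom a b), gcomp (gginv f) f = gid b;
  gcompVr : forall a b (f : ghom a b), gcomp f (gginv f) = gid a }.

Definition Sigma (X : group) : groupoid :=
  @Groupoid unit (fun _ _ => gcar X)
    (fun _ _ _ f g => gmul f g) (fun _ => gone X) (fun _ _ f => ginv f)
    (fun _ _ _ _ f g h => gmulA f g h)
    (fun _ _ f => gmul1l f) (fun _ _ f => gmul1r f)
    (fun _ _ f => gmulVl f) (fun _ _ f => gmulVr f).

Record graph := Graph {
  gv : Type;
  ge : Type;
  src : ge -> gv;
  tgt : ge -> gv }.

(* Zig-zag paths = words representing morphisms of the free groupoid   *)
(* L1F1(G); pfwd traverses an arrow forwards, pbwd backwards.          *)
Inductive path (G : graph) : gv G -> gv G -> Type :=
| pnil a : path a a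
| pfwd (e : ge G) b : path (tgt e) b -> path (src e) b
| pbwd (e : ge G) b : path (src e) b -> path (tgt e) b.

Arguments pnil {G} a.
Arguments pfwd {G} e {b} _.
Arguments pbwd {G} e {b} _.

Fixpoint pcat (G : graph) (a b c : gv G) (p : path a b) : path b c -> path a c :=
  match p in path a b return path b c -> path a c with
  | pnil _ => fun q => q
  | pfwd e p' => fun q => pfwd e (pcat p' q)
  | pbwd e p' => fun q => pbwd e (pcat p' q)
  end.

(* A small groupoidal computad (G, g2, s, t): each 2-cell alpha has     *)
(* parallel morphisms s(alpha), t(alpha) of L1F1(G) (given by paths).  *)
Record computad := Computad {
  cgraph :> graph;
  cells : Type;
  cdom : cells -> gv cgraph;
  ccod : cells -> gv cgraph;
  csrc : forall al, path (cdom al) (ccod al);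
  ctgt : forall al, path (cdom al) (ccod al) }.

Inductive pcong (C : computad) : forall a b : gv C, path a b -> path a b -> Prop :=
| pc_refl a b (p : path a b) : pcong p p
| pc_sym a b (p q : path a b) : pcong p q -> pcong q p
| pc_trans a b (p q r : path a b) : pcong p q -> pcong q r -> pcong p r
| pc_whisk a b c d (p : path a b) (q q' : path b c) (r : path c d) :
    pcong q q' -> pcong (pcat p (pcat q r)) (pcat p (pcat q' r))
| pc_fb (e : ge C) b (p : path (src e) b) : pcong (pfwd e (pbwd e p)) p
| pc_bf (e : ge C) b (p : path (tgt e) b) : pcong (pbwd e (pfwd e p)) p
| pc_rel (al : cells C) : pcong (csrc al) (ctgt al).

(* C presents Y: Y is isomorphic to the quotient groupoid, i.e. there is *)
(* a bijection on objects and a functor from paths to Y, surjective on  *)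
(* each hom-set, whose kernel congruence is exactly pcong.              *)
Definition presents (C : computad) (Y : groupoid) : Prop :=
  exists (fo : gv C -> gobj Y)
         (F : forall a b : gv C, path a b -> @ghom Y (fo a) (fo b)),
    (forall y, exists x, fo x = y) /\
    (forall x x', fo x = fo x' -> x = x') /\
    (forall a, F a a (pnil a) = @gid Y (fo a)) /\
    (forall a b c (p : path a b) (q : path b c),
        F a c (pcat p q) = gcomp (F a b p) (F b c q)) /\
    (forall a b (h : @ghom Y (fo a) (fo b)), exists p, F a b p = h) /\
    (forall a b (p q : path a b), F a b p = F a b q <-> pcong p q).

Definition connected (G : graph) : Prop :=
  inhabited (gv G) /\ forall a b : gv G, inhabited (path a b).

(* Real Euler characteristic of the topological realization of G,      *)
(* computed by real cellular homology of the 1-dimensional CW complex:  *)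
(* C_1 = finitely supported R-valued functions on arrows, C_0 = on      *)
(* objects, boundary(e) = tgt e - src e.  chi is defined (and then an   *)
(* integer) iff H_0 and H_1 are finite dimensional.                     *)
Open Scope R_scope.

Definition ind (P : Prop) : R :=
  if excluded_middle_informative P then 1 else 0.

Definition fsupp (T : Type) (f : T -> R) : Prop :=
  exists l : list T, forall x, f x <> 0 -> In x l.

Definition lsum (T : Type) (l : list T) (f : T -> R) : R :=
  fold_right (fun x acc => f x + acc) 0 l.

Definition is_fsum (T : Type) (f : T -> R) (s : R) : Prop :=
  exists l : list T, NoDup l /\ (forall x, f x <> 0 -> In x l) /\ s = lsum l f.

Definition is_boundary (G : graph) (c : ge G -> R) (d : gv G -> R) : Prop :=
  fsupp c /\
  forall v, is_fsum (fun e => c e * (ind (tgt e = v) - ind (src e = v))) (d v).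

Definition lincomb (T : Type) (z : list (T -> R)) (lam : nat -> R) : T -> R :=
  fun x => lsum (seq 0 (length z)) (fun i => lam i * nth i z (fun _ => 0) x).

Definition is_cycle (G : graph) (c : ge G -> R) : Prop :=
  is_boundary c (fun _ => 0).

Definition is_bdry (G : graph) (d : gv G -> R) : Prop :=
  exists c, is_boundary c d.

Definition dimH1 (G : graph) (k : nat) : Prop :=
  exists z : list (ge G -> R),
    length z = k /\ (forall c, In c z -> is_cycle c) /\
    (forall lam, (forall x, lincomb z lam x = 0) -> forall i, (i < k)%nat -> lam i = 0) /\
    (forall c, is_cycle c -> exists lam, forall x, c x = lincomb z lam x).

(* dim H_0(G; R) = k : C_0 / B_0 has a basis of k elements *)
Definition dimH0 (G : graph) (k : nat) : Prop :=
  exists w : list (gv G -> R),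
    length w = k /\ (forall d, In d w -> fsupp d) /\
    (forall lam, is_bdry (lincomb w lam) -> forall i, (i < k)%nat -> lam i = 0) /\
    (forall d, fsupp d -> exists lam, is_bdry (fun v => d v - lincomb w lam v)).

Definition euler_char (G : graph) (chi : Z) : Prop :=
  exists k0 k1, dimH0 G k0 /\ dimH1 G k1 /\ chi = (Z.of_nat k0 - Z.of_nat k1)%Z.

Close Scope R_scope.

Definition groupoid_deficiencies (Y : groupoid) (d : Z) : Prop :=
  exists C : computad,
    connected C /\ presents C Y /\
    exists (chi : Z) (l : list (cells C)),
      euler_char C chi /\ NoDup l /\ (forall al, In al l) /\
      d = (1 - Z.of_nat (length l) - chi)%Z.

(* Main.v *)
Require Import Defs.
From Stdlib Require Import ZArith.
From Stdlib Require Import Reals List Lia Lra ClassicalEpsilon Classical.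
From Stdlib Require Fin FinFun.
From mathcomp Require all_boot all_algebra Rstruct.
Import ListNotations.
Open Scope R_scope.
Module LA.
Import all_boot all_algebra Rstruct.
Import GRing.Theory.
Local Open Scope ring_scope.

Lemma lsum_big (l : list nat) (f : nat -> R) : lsum l f = \sum_(x <- l) f x.
Proof. elim: l => [|a l IH]; first by rewrite big_nil. by rewrite big_cons -IH. Qed.

Lemma seq_iota s k : List.seq s k = iota s k.
Proof. by elim: k s => [|k IH] s //=; rewrite IH. Qed.

Lemma lsum_ord k (f : nat -> R) : lsum (List.seq 0 k) f = \sum_(i < k) f i.
Proof. by rewrite lsum_big seq_iota -(big_mkord xpredT) /index_iota subn0. Qed.

Lemma indep_le (a b : nat) (M : nat -> nat -> R) :
  (forall lam : nat -> R, (forall j, (j < b)%coq_nat -> lsum (List.seq 0 a) (fun i => Rmult (lam i) (M i j)) = R0) ->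
     forall i, (i < a)%coq_nat -> lam i = R0) -> (a <= b)%coq_nat.
Proof.
move=> H; apply/leP; rewrite leqNgt; apply/negP => ltba.
pose Mx : 'M[R]_(a, b) := \matrix_(i, j) M i j.
have : kermx Mx != 0.
  apply/negP => /eqP K0.
  have := mxrank_ker Mx; rewrite K0 mxrank0 => /esym /eqP.
  rewrite subn_eq0 => /(leq_trans)/(_ (rank_leq_col Mx)).
  by rewrite leqNgt ltba.
case/rowV0Pn => v /sub_kermxP vM vn0.
pose lam := fun i : nat => match (ltnP i a) with LtnNotGeq h => v 0 (Ordinal h) | _ => 0 end.
have lamE : forall i : 'I_a, lam i = v 0 i.
  move=> i; rewrite /lam; case: ltnP => h; last by move: (ltn_ord i); rewrite ltnNge h.
  by congr (v 0 _); apply: val_inj.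
apply/negP: vn0; apply/negPn/eqP; apply/rowP => i; rewrite mxE -lamE.
apply: H; last by apply/ltP.
move=> j /ltP hj.
have := congr1 (fun A : 'M[R]_(1,b) => A 0 (Ordinal hj)) vM; rewrite !mxE => E.
rewrite lsum_ord -[RHS]E; apply: eq_bigr => k _.
by rewrite lamE mxE.
Qed.
End LA.
Section GroupLemmas.
Variable X : group.
Lemma ginv_unique (a b : X) : gmul a b = gone X -> a = ginv b.
Proof.
  intro H. rewrite <- (gmul1r a), <- (gmulVr b), gmulA, H, gmul1l. reflexivity.
Qed.
Lemma ginv_inv (a : X) : ginv (ginv a) = a.
Proof. symmetry. apply ginv_unique. apply gmulVr. Qed.
Lemma ginv_mul (a b : X) : ginv (gmul a b) = gmul (ginv b) (ginv a).
Proof.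
  symmetry. apply ginv_unique.
  rewrite <- gmulA, (gmulA (ginv a)), gmulVl, gmul1l, gmulVl. reflexivity.
Qed.
End GroupLemmas.

Definition flip {A : Type} (p : A * bool) : A * bool := (fst p, negb (snd p)).
Definition winv {n} (w : word n) : word n := List.rev (List.map flip w).

Lemma winv_app {n} (u v : word n) : winv (u ++ v) = winv v ++ winv u.
Proof. unfold winv. rewrite List.map_app, List.rev_app_distr. reflexivity. Qed.

Lemma gcong_ctx {n} (R : list (word n)) u v w w' :
  gcong R u v -> gcong R (w ++ u ++ w') (w ++ v ++ w').
Proof.
  induction 1.
  - apply gc_refl.
  - apply gc_sym; assumption.
  - eapply gc_trans; eassumption.
  - replace (w ++ (u ++ (x, b) :: (x, negb b) :: v) ++ w') with
      ((w ++ u) ++ (x, b) :: (x, negb b) :: (v ++ w')) by (rewrite <- !app_assoc; reflexivity).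
    replace (w ++ (u ++ v) ++ w') with ((w ++ u) ++ (v ++ w')) by (rewrite <- !app_assoc; reflexivity).
    apply gc_cancel.
  - replace (w ++ (u ++ r ++ v) ++ w') with ((w ++ u) ++ r ++ (v ++ w')) by (rewrite <- !app_assoc; reflexivity).
    replace (w ++ (u ++ v) ++ w') with ((w ++ u) ++ (v ++ w')) by (rewrite <- !app_assoc; reflexivity).
    apply gc_rel; assumption.
Qed.

Lemma gcong_invcancel {n} (R : list (word n)) t : gcong R (winv t ++ t) [].
Proof.
  induction t as [|[x b] t IH].
  - apply gc_refl.
  - change (winv ((x, b) :: t)) with (winv t ++ [(x, negb b)]).
    eapply gc_trans; [|exact IH].
    rewrite <- app_assoc. simpl.
    pose proof (@gc_cancel n R (winv t) x (negb b) t) as H.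
    rewrite Bool.negb_involutive in H. exact H.
Qed.

Lemma gcong_app {n} (R : list (word n)) u u' v v' :
  gcong R u u' -> gcong R v v' -> gcong R (u ++ v) (u' ++ v').
Proof.
  intros H1 H2. eapply gc_trans.
  - pose proof (@gcong_ctx _ R _ _ [] v H1) as H. rewrite !app_nil_l in H. exact H.
  - pose proof (@gcong_ctx _ R _ _ u' [] H2) as H. rewrite !app_nil_r in H. exact H.
Qed.

Section Pres.
Variables (X : group) (n : nat) (R : list (word n)) (F : word n -> X).
Hypothesis Fnil : F [] = gone X.
Hypothesis Fapp : forall u v, F (u ++ v) = gmul (F u) (F v).
Hypothesis Fker : forall u v, F u = F v <-> gcong R u v.
Lemma F_winv u : F (winv u) = ginv (F u).
Proof.
  apply ginv_unique. rewrite <- Fapp, <- Fnil. apply Fker. apply gcong_invcancel.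
Qed.
End Pres.

Definition lval {n} (f : Fin.t n -> R) (p : Fin.t n * bool) : R :=
  if snd p then f (fst p) else - f (fst p).
Definition phi {n} (f : Fin.t n -> R) (w : word n) : R :=
  fold_right (fun p acc => lval f p + acc) 0 w.

Lemma phi_app {n} f (u v : word n) : phi f (u ++ v) = phi f u + phi f v.
Proof. induction u; simpl; [ring| rewrite IHu; ring]. Qed.
Lemma phi_inv {n} f (u : word n) : phi f (winv u) = - phi f u.
Proof.
  induction u as [|[x b] u IH]. simpl; ring.
  change (winv ((x, b) :: u)) with (winv u ++ [(x, negb b)]).
  rewrite phi_app, IH. simpl. unfold lval; destruct b; simpl; ring.
Qed.
Lemma phi_gcong {n} (R0 : list (word n)) f :
  (forall r, In r R0 -> phi f r = 0) -> forall u v, gcong R0 u v -> phi f u = phi f v.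
Proof.
  intros Hr u v H. induction H; try congruence.
  - rewrite !phi_app. simpl. unfold lval. destruct b; simpl; ring.
  - rewrite !phi_app, (Hr r) by assumption. ring.
Qed.

Lemma lsum_ext {T} (l : list T) f g : (forall x, In x l -> f x = g x) -> lsum l f = lsum l g.
Proof.
  induction l; intro H; simpl; auto.
  rewrite H by (left; auto). rewrite IHl; auto. intros; apply H; right; auto.
Qed.
Lemma lsum_zero {T} (l : list T) f : (forall x, In x l -> f x = 0) -> lsum l f = 0.
Proof.
  intro H. transitivity (lsum l (fun _ => 0)). apply lsum_ext; auto.
  clear H; induction l; simpl; auto. rewrite IHl; ring.
Qed.
Lemma lsum_plus {T} (l : list T) f g : lsum l (fun x => f x + g x) = lsum l f + lsum l g.
Proof. induction l; simpl. ring. rewrite IHl; ring. Qed.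
Lemma lsum_opp {T} (l : list T) f : lsum l (fun x => - f x) = - lsum l f.
Proof. induction l; simpl. ring. rewrite IHl; ring. Qed.
Lemma lsum_app {T} (l l' : list T) f : lsum (l ++ l') f = lsum l f + lsum l' f.
Proof. induction l; simpl. ring. rewrite IHl; ring. Qed.

Definition dlt (j i : nat) : R := if Nat.eq_dec j i then 1 else 0.

Lemma lsum_delta_out c j s k : (j < s \/ s + k <= j)%nat ->
  lsum (List.seq s k) (fun i => c i * dlt j i) = 0.
Proof.
  intro H. apply lsum_zero. intros x Hx. apply in_seq in Hx.
  unfold dlt. destruct (Nat.eq_dec j x). lia. ring.
Qed.
Lemma lsum_delta_in c j s k : (s <= j < s + k)%nat ->
  lsum (List.seq s k) (fun i => c i * dlt j i) = c j.
Proof.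
  revert s. induction k; intros s H. lia.
  simpl. unfold dlt at 1. destruct (Nat.eq_dec j s).
  - subst. rewrite lsum_delta_out by lia. ring.
  - rewrite IHk by lia. ring.
Qed.

Definition idx {n} (x : Fin.t n) : nat := proj1_sig (Fin.to_nat x).
Lemma idx_lt {n} (x : Fin.t n) : (idx x < n)%nat.
Proof. unfold idx; destruct (Fin.to_nat x); simpl; auto. Qed.

Lemma of_nat_idx {n} (k : Fin.t n) (h : (idx k < n)%nat) : Fin.of_nat_lt h = k.
Proof.
  unfold idx in *. rewrite (Fin.of_nat_ext h (proj2_sig (Fin.to_nat k))). apply Fin.of_nat_to_nat_inv.
Qed.

Lemma phi_cons {n} f (p : Fin.t n * bool) w : phi f (p :: w) = lval f p + phi f w.
Proof. reflexivity. Qed.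

Lemma phi_lin n (lam : nat -> R) (w : word n) :
  lsum (List.seq 0 n) (fun i => lam i * phi (fun x => dlt (idx x) i) w) = phi (fun x => lam (idx x)) w.
Proof.
  induction w as [|[x b] w IH].
  - apply lsum_zero; intros; simpl; ring.
  - transitivity (lsum (List.seq 0 n) (fun i => lam i * lval (fun x => dlt (idx x) i) (x,b)
                                         + lam i * phi (fun x => dlt (idx x) i) w)).
    { apply lsum_ext; intros. rewrite phi_cons. ring. }
    rewrite lsum_plus, IH, phi_cons. f_equal. unfold lval; simpl. destruct b.
    + apply lsum_delta_in. pose proof (idx_lt x). lia.
    + transitivity (lsum (List.seq 0 n) (fun i => - (lam i * dlt (idx x) i))).
      { apply lsum_ext; intros; ring. }
      rewrite lsum_opp, lsum_delta_in. reflexivity. pose proof (idx_lt x). lia.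
Qed.

Ltac wordlia := unfold word in *; lia.

Lemma class_bound (X : group) n0 (R0 : list (word n0)) n (R1 : list (word n)) :
  is_presentation X R0 -> is_presentation X R1 -> (n <= length R1 + n0)%nat.
Proof.
  intros [_ [F0 [F0nil [F0app [F0surj F0ker]]]]] [_ [F [Fnil [Fapp [Fsurj Fker]]]]].
  assert (Hu : forall j : Fin.t n0, {w : word n | F w = F0 [(j,true)]})
    by (intro j; apply constructive_indefinite_description; apply Fsurj).
  set (u := fun j => proj1_sig (Hu j)).
  assert (HuE : forall j, F (u j) = F0 [(j,true)]) by (intro j; exact (proj2_sig (Hu j))).
  set (sub := fold_right (fun (p : Fin.t n0 * bool) acc =>
                 (if snd p then u (fst p) else winv (u (fst p))) ++ acc) (@nil (Fin.t n * bool))).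
  assert (Hsub : forall w0, F (sub w0) = F0 w0).
  { induction w0 as [|[j b] w0 IH]. simpl. rewrite Fnil, F0nil; auto.
    simpl (sub _). rewrite Fapp, IH. change ((j,b)::w0) with ([(j,b)] ++ w0). rewrite F0app. f_equal.
    destruct b; simpl. apply HuE.
    rewrite (F_winv X n R1 F Fnil Fapp Fker), HuE.
    symmetry; apply ginv_unique. rewrite <- F0app, <- F0nil. apply F0ker.
    exact (gc_cancel R0 [] j false []). }
  assert (Hrep : forall w, exists w0, gcong R1 w (sub w0)).
  { intro w. destruct (F0surj (F w)) as [w0 Hw0]. exists w0. apply Fker. rewrite Hsub. auto. }
  set (ucol := fun k => match lt_dec k n0 with left h => u (Fin.of_nat_lt h) | right _ => [] end).
  set (col := fun j => if lt_dec j (length R1) then nth j R1 [] else ucol (j - length R1)%nat).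
  apply (LA.indep_le n (length R1 + n0) (fun i j => phi (fun x => dlt (idx x) i) (col j))).
  intros lam Hlam i Hi.
  set (f := fun x : Fin.t n => lam (idx x)).
  assert (Hcol : forall j, (j < length R1 + n0)%nat -> phi f (col j) = 0).
  { intros j Hj. unfold f. rewrite <- phi_lin. apply Hlam; auto. }
  assert (HR : forall r, In r R1 -> phi f r = 0).
  { intros r Hr. destruct (In_nth _ _ [] Hr) as [j [Hj Hjr]]. rewrite <- Hjr.
    assert (Hj' : (j < length R1 + n0)%nat) by wordlia. specialize (Hcol j Hj'). unfold col in Hcol.
    destruct (lt_dec j (length R1)); [exact Hcol | wordlia]. }
  assert (HU : forall k, phi f (u k) = 0).
  { intro k. pose proof (idx_lt k) as Hk.
    assert (Hj' : (length R1 + idx k < length R1 + n0)%nat) by wordlia. pose proof (Hcol (length R1 + idx k)%nat Hj') as H. unfold col in H.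
    destruct lt_dec; [wordlia|].
    replace (length R1 + idx k - length R1)%nat with (idx k) in H by wordlia.
    unfold ucol in H. destruct (lt_dec (idx k) n0) as [h|h]; [|wordlia].
    rewrite of_nat_idx in H.
    exact H. }
  assert (Hs : forall w0, phi f (sub w0) = 0).
  { induction w0 as [|[j b] w0 IH]. reflexivity.
    simpl (sub _). rewrite phi_app, IH. destruct b; simpl.
    rewrite HU; ring. rewrite phi_inv, HU; ring. }
  destruct (Hrep [(Fin.of_nat_lt Hi, true)]) as [w0 Hw0].
  apply (phi_gcong R1 f HR) in Hw0. rewrite Hs in Hw0.
  rewrite phi_cons in Hw0. unfold lval, f, idx in Hw0. simpl in Hw0.
  rewrite Fin.to_nat_of_nat in Hw0. simpl in Hw0. lra.
Qed.

Lemma Z_max (P : Z -> Prop) (B d0 : Z) : P d0 -> (forall d, P d -> (d <= B)%Z) ->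
  exists m, IsGreatest P m.
Proof.
  intros Hd0 HB.
  assert (H : forall k : nat, forall d, P d -> (B - d <= Z.of_nat k)%Z -> exists m, IsGreatest P m).
  { induction k; intros d Pd Hk.
    - exists d. split; auto. intros d' Pd'. specialize (HB d' Pd'). lia.
    - destruct (classic (exists d', P d' /\ (d < d')%Z)) as [[d' [Pd' Hlt]]|Hno].
      + apply (IHk d'); auto. lia.
      + exists d. split; auto. intros d' Pd'.
        destruct (Z_lt_le_dec d d'); auto. exfalso; apply Hno; eauto. }
  apply (H (Z.to_nat (B - d0)) d0 Hd0). lia.
Qed.

Fixpoint wordE {G : graph} {a b : gv G} (p : path a b) : list (ge G * bool) :=
  match p with
  | @pnil _ _ => []
  | @pfwd _ e _ p' => (e, true) :: wordE p'
  | @pbwd _ e _ p' => (e, false) :: wordE p'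
  end.

Lemma wordE_pcat {G : graph} {a b c : gv G} (p : path a b) (q : path b c) :
  wordE (pcat p q) = wordE p ++ wordE q.
Proof. induction p; simpl; try rewrite IHp; reflexivity. Qed.

Lemma pcat_nil_r {G : graph} {a b : gv G} (p : path a b) : pcat p (pnil b) = p.
Proof. induction p; simpl; try rewrite IHp; reflexivity. Qed.

Lemma pcat_assoc {G : graph} {a b c d : gv G} (p : path a b) (q : path b c) (r : path c d) :
  pcat p (pcat q r) = pcat (pcat p q) r.
Proof. induction p; simpl; try rewrite IHp; reflexivity. Qed.

Lemma pcong_cat (C : computad) (a b c : gv C) (p p' : path a b) (q q' : path b c) :
  pcong p p' -> pcong q q' -> pcong (pcat p q) (pcat p' q').
Proof.
  intros H1 H2. eapply pc_trans.
  - exact (pc_whisk (pnil a) q H1).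
  - pose proof (pc_whisk p' (pnil c) H2) as H. rewrite !pcat_nil_r in H. exact H.
Qed.

Definition ugraph (n : nat) : graph := @Graph unit (Fin.t n) (fun _ => tt) (fun _ => tt).

Fixpoint pw {n} (w : word n) : @path (ugraph n) tt tt :=
  match w with
  | [] => @pnil (ugraph n) tt
  | (x, true) :: w' => @pfwd (ugraph n) x tt (pw w')
  | (x, false) :: w' => @pbwd (ugraph n) x tt (pw w')
  end.

Lemma wordE_pw {n} (w : word n) : wordE (pw w) = w.
Proof. induction w as [|[x []] w IH]; simpl; try rewrite IH; reflexivity. Qed.

Lemma pw_app {n} (u v : word n) : pw (u ++ v) = pcat (pw u) (pw v).
Proof. induction u as [|[x []] u IH]; simpl; try rewrite IH; reflexivity. Qed.

Fixpoint allfin (n : nat) : list (Fin.t n) :=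
  match n with 0 => [] | S m => Fin.F1 :: List.map Fin.FS (allfin m) end.

Lemma allfin_In n (x : Fin.t n) : In x (allfin n).
Proof.
  induction n. apply (Fin.case0 (fun x => In x (allfin 0)) x).
  apply (Fin.caseS' x); simpl. left; auto.
  intro y. right. apply in_map. apply IHn.
Qed.
Lemma allfin_length n : length (allfin n) = n.
Proof. induction n; simpl; auto. rewrite length_map, IHn; auto. Qed.
Lemma allfin_NoDup n : NoDup (allfin n).
Proof.
  induction n; simpl. constructor. constructor.
  - intro H. apply in_map_iff in H. destruct H as [y [H _]]. discriminate.
  - apply FinFun.Injective_map_NoDup; auto. intros x y H. apply Fin.FS_inj; auto.
Qed.

Definition Ccomp (n : nat) (R1 : list (word n)) : computad :=
  @Computad (ugraph n) (Fin.t (length R1)) (fun _ => tt) (fun _ => tt)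
    (fun k => pw (nth (idx k) R1 [])) (fun _ => @pnil (ugraph n) tt).

Section Dira.
Variables (n : nat) (R1 : list (word n)).

Lemma pcong_gcong (a b : unit) (p q : @path (ugraph n) a b) :
  @pcong (Ccomp n R1) a b p q -> gcong R1 (wordE p) (wordE q).
Proof.
  induction 1.
  - apply gc_refl.
  - apply gc_sym; auto.
  - eapply gc_trans; eauto.
  - rewrite !wordE_pcat. apply gcong_ctx. auto.
  - exact (gc_cancel R1 [] e true (wordE p)).
  - exact (gc_cancel R1 [] e false (wordE p)).
  - simpl. rewrite wordE_pw.
    pose proof (@gc_rel n R1 [] (nth (idx al) R1 []) [] (nth_In R1 [] (idx_lt al))) as H.
    rewrite app_nil_r in H. exact H.
Qed.

Lemma gcong_pcong (u v : word n) : gcong R1 u v -> @pcong (Ccomp n R1) tt tt (pw u) (pw v).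
Proof.
  induction 1.
  - apply pc_refl.
  - apply pc_sym; auto.
  - eapply pc_trans; eauto.
  - rewrite !pw_app. apply pcong_cat. apply pc_refl.
    destruct b; simpl.
    + exact (@pc_fb (Ccomp n R1) x tt (pw v)).
    + exact (@pc_bf (Ccomp n R1) x tt (pw v)).
  - rewrite !pw_app. apply pcong_cat. apply pc_refl.
    change (pw v) with (pcat (@pnil (ugraph n) tt) (pw v)) at 2.
    apply pcong_cat; [|apply pc_refl].
    destruct (In_nth _ _ [] H) as [j [Hj Hjr]].
    pose proof (pc_rel (C:=Ccomp n R1) (Fin.of_nat_lt Hj)) as Hr. simpl in Hr.
    subst r. assert (Ek : idx (Fin.of_nat_lt Hj) = j) by (unfold idx; rewrite Fin.to_nat_of_nat; reflexivity).
    rewrite <- Ek at 1. exact Hr.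
Qed.

Lemma pcong_pw (a b : unit) (p : @path (ugraph n) a b) :
  match a, b return @path (ugraph n) a b -> Prop with
  | tt, tt => fun p => @pcong (Ccomp n R1) tt tt p (pw (wordE p)) end p.
Proof.
  induction p as [a|e b p IH|e b p IH].
  - destruct a. apply pc_refl.
  - destruct b. simpl in *.
    exact (pcong_cat (Ccomp n R1) _ _ _ (@pfwd (ugraph n) e tt (@pnil (ugraph n) tt)) _ p _ (pc_refl _) IH).
  - destruct b. simpl in *.
    exact (pcong_cat (Ccomp n R1) _ _ _ (@pbwd (ugraph n) e tt (@pnil (ugraph n) tt)) _ p _ (pc_refl _) IH).
Qed.

Lemma pcong_iff (a b : unit) (p q : @path (ugraph n) a b) :
  @pcong (Ccomp n R1) a b p q <-> gcong R1 (wordE p) (wordE q).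
Proof.
  split. apply pcong_gcong.
  intro H. apply gcong_pcong in H.
  pose proof (pcong_pw a b p) as Hp. pose proof (pcong_pw a b q) as Hq.
  destruct a, b. simpl in *.
  eapply pc_trans; [exact Hp|]. eapply pc_trans; [exact H|]. apply pc_sym; exact Hq.
Qed.
End Dira.

Lemma fsum_zero {T} (f : T -> R) s : is_fsum f s -> (forall x, f x = 0) -> s = 0.
Proof. intros [l [_ [_ Hs]]] H. rewrite Hs. apply lsum_zero. auto. Qed.

Lemma bdry_zero (G : graph) (Hst : forall e : ge G, src e = tgt e) (c : ge G -> R) (d : gv G -> R) :
  is_boundary c d -> forall v, d v = 0.
Proof.
  intros [_ Hc] v. apply (fsum_zero _ _ (Hc v)). intro e. rewrite Hst. ring.
Qed.

Lemma bdry_of_zero (G : graph) (g : gv G -> R) : (forall v, g v = 0) -> is_bdry g.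
Proof.
  intro H. exists (fun _ => 0). split.
  - exists []. intros x Hx. exfalso. apply Hx. reflexivity.
  - intro v. exists []. split. constructor. split.
    + intros x Hx. exfalso. apply Hx. ring.
    + rewrite H. reflexivity.
Qed.

Lemma cycle_of_fsupp (G : graph) (Hst : forall e : ge G, src e = tgt e) (c : ge G -> R) :
  fsupp c -> is_cycle c.
Proof.
  intro Hc. split; auto. intro v. exists []. split. constructor. split.
  - intros x Hx. exfalso. apply Hx. rewrite Hst. ring.
  - reflexivity.
Qed.

Lemma dimH0_one (G : graph) (a0 : gv G) (Ha : forall v, v = a0)
  (Hst : forall e : ge G, src e = tgt e) : dimH0 G 1.
Proof.
  exists [fun _ => 1]. split. reflexivity. split; [|split].
  - intros d [Hd|[]]. subst d. exists [a0]. intros x _. rewrite (Ha x). left; auto.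
  - intros lam [c Hc] i Hi. pose proof (bdry_zero G Hst c _ Hc a0) as H.
    unfold lincomb in H; simpl in H. assert (i = 0%nat) by lia. subst i. lra.
  - intros d _. exists (fun _ => d a0). apply bdry_of_zero. intro v.
    unfold lincomb; simpl. rewrite (Ha v). ring.
Qed.

Lemma dimH0_pos (G : graph) (a0 : gv G) (Ha : forall v, v = a0)
  (Hst : forall e : ge G, src e = tgt e) k : dimH0 G k -> (1 <= k)%nat.
Proof.
  intros [w [Hl [_ [_ Hsp]]]]. destruct k; [|lia]. exfalso.
  destruct (Hsp (fun _ => 1)) as [lam [c Hc]].
  - exists [a0]. intros x _. rewrite (Ha x). left; auto.
  - pose proof (bdry_zero G Hst c _ Hc a0) as H. simpl in H.
    unfold lincomb in H. rewrite Hl in H. simpl in H. lra.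
Qed.

Definition zbasis (n : nat) : list (Fin.t n -> R) :=
  List.map (fun i => fun e : Fin.t n => dlt (idx e) i) (List.seq 0 n).

Lemma zbasis_length n : length (zbasis n) = n.
Proof. unfold zbasis. rewrite length_map, length_seq. auto. Qed.

Lemma lincomb_z n lam (x : Fin.t n) : lincomb (zbasis n) lam x = lam (idx x).
Proof.
  unfold lincomb. rewrite zbasis_length.
  transitivity (lsum (List.seq 0 n) (fun i => lam i * dlt (idx x) i)).
  - apply lsum_ext. intros i Hi. apply in_seq in Hi. f_equal.
    rewrite (nth_indep _ _ (fun e : Fin.t n => dlt (idx e) 0)) by (rewrite zbasis_length; lia).
    unfold zbasis. rewrite (map_nth (fun i => fun e : Fin.t n => dlt (idx e) i) (List.seq 0 n) 0%nat i).
    rewrite seq_nth by lia. reflexivity.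
  - apply lsum_delta_in. pose proof (idx_lt x). lia.
Qed.

Lemma dimH1_u n : dimH1 (ugraph n) n.
Proof.
  exists (zbasis n). split. apply zbasis_length. split; [|split].
  - intros c _. apply cycle_of_fsupp. reflexivity.
    exists (allfin n). intros x _. apply allfin_In.
  - intros lam H i Hi. specialize (H (Fin.of_nat_lt Hi)).
    pose proof (lincomb_z n lam (Fin.of_nat_lt Hi)) as E.
    unfold idx in E; rewrite Fin.to_nat_of_nat in E. simpl in E. rewrite <- E. exact H.
  - intros c _. exists (fun i => match lt_dec i n with left h => c (Fin.of_nat_lt h) | right _ => 0 end).
    intro x. symmetry. etransitivity. apply (lincomb_z n). destruct (lt_dec (idx x) n) as [h|h].
    + rewrite of_nat_idx. reflexivity.
    + pose proof (idx_lt x). lia.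
Qed.

Lemma dir_a (X : group) n (R1 : list (word n)) :
  is_presentation X R1 -> groupoid_deficiencies (Sigma X) (Z.of_nat n - Z.of_nat (length R1)).
Proof.
  intros [HND [F [Fnil [Fapp [Fsurj Fker]]]]].
  exists (Ccomp n R1). split; [|split].
  - split. constructor. exact tt. intros [] []. constructor. exact (@pnil (ugraph n) tt).
  - exists (fun _ => tt), (fun (a b : unit) (p : @path (ugraph n) a b) => F (wordE p)).
    split; [|split; [|split; [|split; [|split]]]].
    + intros []. exists tt. reflexivity.
    + intros [] [] _. reflexivity.
    + intros a. simpl. exact Fnil.
    + intros a b c p q. simpl. rewrite wordE_pcat. apply Fapp.
    + intros [] [] h. destruct (Fsurj h) as [u Hu]. exists (pw u). simpl. rewrite wordE_pw. exact Hu.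
    + intros a b p q. rewrite Fker. symmetry. apply pcong_iff.
  - exists (1 - Z.of_nat n)%Z, (allfin (length R1)). split; [|split; [|split]].
    + exists 1%nat, n. split; [|split].
      * apply (dimH0_one (ugraph n) tt). intros []; reflexivity. reflexivity.
      * apply dimH1_u.
      * lia.
    + apply allfin_NoDup.
    + apply allfin_In.
    + rewrite (allfin_length (length R1) : @length (cells (Ccomp n R1)) (allfin (length R1)) = length R1). lia.
Qed.

Definition castp {G : graph} {a b a' b' : gv G} (ea : a = a') (eb : b = b') (p : path a b) : path a' b' :=
  match ea in _ = a1 return path a1 b' with
  | eq_refl => match eb in _ = b1 return path a b1 with eq_refl => p end end.

Lemma wordE_castp {G : graph} {a b a' b' : gv G} (ea : a = a') (eb : b = b') (p : path a b) :
  wordE (castp ea eb p) = wordE p.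
Proof. destruct ea, eb. reflexivity. Qed.

Definition def_of {A} (L : list A) : Fin.t (length L) -> A :=
  match L return Fin.t (length L) -> A with
  | [] => fun i => Fin.case0 (fun _ => A) i
  | a :: _ => fun _ => a end.

Definition decE {A : Type} (x y : A) : {x = y} + {x <> y} := excluded_middle_informative (x = y).

Section DirB.
Variables (X : group) (C : computad) (fo : gv C -> unit)
  (FC : forall a b : gv C, path a b -> @ghom (Sigma X) (fo a) (fo b)).
Hypothesis Hfoi : forall x x', fo x = fo x' -> x = x'.
Hypothesis FCnil : forall a, FC a a (pnil a) = @gid (Sigma X) (fo a).
Hypothesis FCcat : forall a b c (p : path a b) (q : path b c),
        FC a c (pcat p q) = gcomp (FC a b p) (FC b c q).
Hypothesis FCker : forall a b (p q : path a b), FC a b p = FC a b q <-> pcong p q.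
Hypothesis FCsurj : forall a b (h : @ghom (Sigma X) (fo a) (fo b)), exists p, FC a b p = h.
Variable a0 : gv C.

Lemma Ha : forall v, v = a0.
Proof. intro v. apply Hfoi. destruct (fo v), (fo a0). reflexivity. Qed.
Lemma Hst : forall e : ge C, src e = tgt e.
Proof. intro e. rewrite (Ha (src e)), (Ha (tgt e)). reflexivity. Qed.

Lemma FC_castp {a b a' b'} (ea : a = a') (eb : b = b') (p : path a b) :
  @eq (gcar X) (FC a' b' (castp ea eb p)) (FC a b p).
Proof. destruct ea, eb. reflexivity. Qed.

Definition gE (e : ge C) : gcar X := FC (src e) (tgt e) (pfwd e (pnil (tgt e))).
Definition lettE (p : ge C * bool) : gcar X := if snd p then gE (fst p) else ginv (gE (fst p)).
Definition FwE (w : list (ge C * bool)) : gcar X :=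
  fold_right (fun p acc => gmul (lettE p) acc) (gone X) w.

Lemma FwE_app u v : FwE (u ++ v) = gmul (FwE u) (FwE v).
Proof.
  induction u as [|p u IH]; simpl. rewrite gmul1l; reflexivity.
  rewrite IH, gmulA. reflexivity.
Qed.

Lemma FC_bwd e : @eq (gcar X) (FC (tgt e) (src e) (pbwd e (pnil (src e)))) (ginv (gE e)).
Proof.
  apply ginv_unique.
  transitivity (FC (tgt e) (tgt e) (pbwd e (pfwd e (pnil (tgt e))))).
  - symmetry. exact (FCcat (tgt e) (src e) (tgt e) (pbwd e (pnil (src e))) (pfwd e (pnil (tgt e)))).
  - transitivity (FC (tgt e) (tgt e) (pnil (tgt e))).
    + apply FCker. apply pc_bf.
    + rewrite FCnil. reflexivity.
Qed.

Lemma FC_word a b (p : path a b) : @eq (gcar X) (FC a b p) (FwE (wordE p)).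
Proof.
  induction p as [a|e b p IH|e b p IH].
  - rewrite FCnil. reflexivity.
  - transitivity (gmul (gE e) (FC _ _ p)).
    + exact (FCcat (src e) (tgt e) b (pfwd e (pnil (tgt e))) p).
    + rewrite IH. reflexivity.
  - transitivity (gmul (ginv (gE e)) (FC _ _ p)).
    + rewrite <- FC_bwd. exact (FCcat (tgt e) (src e) b (pbwd e (pnil (src e))) p).
    + rewrite IH. reflexivity.
Qed.

Definition loop (p : ge C * bool) : path a0 a0 :=
  let e := fst p in
  if snd p then castp (Ha (src e)) (Ha (tgt e)) (pfwd e (pnil (tgt e)))
  else castp (Ha (tgt e)) (Ha (src e)) (pbwd e (pnil (src e))).

Fixpoint pwl (w : list (ge C * bool)) : path a0 a0 :=
  match w with [] => pnil a0 | p :: w' => pcat (loop p) (pwl w') end.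

Lemma wordE_pwl w : wordE (pwl w) = w.
Proof.
  induction w as [|[e []] w IH]; simpl. reflexivity.
  all: rewrite wordE_pcat, IH; unfold loop; simpl; rewrite wordE_castp; reflexivity.
Qed.

Lemma FC_pwl w : @eq (gcar X) (FC a0 a0 (pwl w)) (FwE w).
Proof. rewrite FC_word, wordE_pwl. reflexivity. Qed.

Variable L : list (ge C).
Hypothesis L_nd : NoDup L.
Hypothesis L_all : forall e, In e L.

Definition nL := length L.
Definition hh (k : Fin.t nL) : ge C := nth (idx k) L (def_of L k).

Lemma idx_ex (e : ge C) : {j | (j < nL)%nat & nth j L e = e}.
Proof.
  destruct (constructive_indefinite_description _ (In_nth L e e (L_all e))) as [j [H1 H2]].
  exists j; auto.
Qed.

Definition hh' (e : ge C) : Fin.t nL := let (j, Hj, _) := idx_ex e in Fin.of_nat_lt Hj.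

Lemma hh_hh' e : hh (hh' e) = e.
Proof.
  unfold hh, hh'. destruct (idx_ex e) as [j Hj Hn].
  assert (E : idx (Fin.of_nat_lt Hj) = j) by (unfold idx; rewrite Fin.to_nat_of_nat; reflexivity).
  assert (E' : forall k : Fin.t nL, idx k = j -> nth (idx k) L (def_of L k) = e).
  { intros k Hk. rewrite Hk. rewrite (nth_indep L _ e Hj). exact Hn. }
  exact (E' _ E).
Qed.

Lemma hh_inj k k' : hh k = hh k' -> k = k'.
Proof.
  unfold hh. intro H. apply Fin.to_nat_inj. fold (idx k) (idx k').
  rewrite (nth_indep L _ (def_of L k) (idx_lt k')) in H.
  apply (proj1 (NoDup_nth L (def_of L k)) L_nd); auto; apply idx_lt.
Qed.

Lemma hh'_hh k : hh' (hh k) = k.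
Proof. apply hh_inj. apply hh_hh'. Qed.

Definition letter (p : ge C * bool) : Fin.t nL * bool := (hh' (fst p), snd p).
Definition unletter (p : Fin.t nL * bool) : ge C * bool := (hh (fst p), snd p).
Definition mapL (w : list (ge C * bool)) : word nL := List.map letter w.
Definition unmap (w : word nL) : list (ge C * bool) := List.map unletter w.

Lemma unmap_mapL w : unmap (mapL w) = w.
Proof.
  unfold unmap, mapL. rewrite map_map. rewrite <- (map_id w) at 2. apply map_ext.
  intros [e b]. unfold unletter, letter. simpl. rewrite hh_hh'. reflexivity.
Qed.
Lemma mapL_unmap w : mapL (unmap w) = w.
Proof.
  unfold unmap, mapL. rewrite map_map. rewrite <- (map_id w) at 2. apply map_ext.
  intros [e b]. unfold unletter, letter. simpl. rewrite hh'_hh. reflexivity.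
Qed.

Variable l : list (cells C).
Hypothesis l_all : forall al, In al l.

Definition relw (al : cells C) : word nL :=
  mapL (wordE (csrc al)) ++ winv (mapL (wordE (ctgt al))).
Definition R1 : list (word nL) := nodup decE (List.map relw l).

Lemma R1_length : (length R1 <= length l)%nat.
Proof.
  rewrite <- (length_map relw l). apply NoDup_incl_length. apply NoDup_nodup.
  intros r Hr. apply nodup_In in Hr. exact Hr.
Qed.

Lemma relw_R1 al : In (relw al) R1.
Proof. apply nodup_In. apply in_map. apply l_all. Qed.

Definition Fw (w : word nL) : gcar X := FwE (unmap w).

Lemma Fw_app u v : Fw (u ++ v) = gmul (Fw u) (Fw v).
Proof. unfold Fw, unmap. rewrite map_app. apply FwE_app. Qed.

Lemma Fw_winv w : Fw (winv w) = ginv (Fw w).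
Proof.
  induction w as [|[x b] w IH].
  - unfold Fw; simpl. apply ginv_unique. apply gmul1l.
  - change (winv ((x, b) :: w)) with (winv w ++ [(x, negb b)]).
    rewrite Fw_app, IH. unfold Fw at 2 3. simpl. rewrite ginv_mul, gmul1r.
    unfold lettE; destruct b; simpl; try rewrite ginv_inv; reflexivity.
Qed.

Lemma pcong_gcongL a b (p q : path a b) : pcong p q -> gcong R1 (mapL (wordE p)) (mapL (wordE q)).
Proof.
  induction 1.
  - apply gc_refl.
  - apply gc_sym; auto.
  - eapply gc_trans; eauto.
  - rewrite !wordE_pcat. unfold mapL. rewrite !map_app. apply gcong_ctx. auto.
  - exact (gc_cancel R1 [] (hh' e) true (mapL (wordE p))).
  - exact (gc_cancel R1 [] (hh' e) false (mapL (wordE p))).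
  - set (S := mapL (wordE (csrc al))). set (T := mapL (wordE (ctgt al))).
    eapply gc_trans.
    + pose proof (@gcong_app nL R1 S S [] (winv T ++ T) (gc_refl R1 S) (gc_sym (gcong_invcancel R1 T))) as H.
      rewrite app_nil_r in H. exact H.
    + rewrite app_assoc.
      pose proof (@gc_rel nL R1 [] (S ++ winv T) T (relw_R1 al)) as H. simpl in H. exact H.
Qed.

Lemma presB : is_presentation X R1.
Proof.
  split. apply NoDup_nodup.
  exists Fw. split; [reflexivity|split; [apply Fw_app|split]].
  - intro x. destruct (FCsurj a0 a0 x) as [p Hp]. exists (mapL (wordE p)).
    unfold Fw. rewrite unmap_mapL. rewrite <- FC_word. exact Hp.
  - intros u v. split.
    + intro H.
      assert (H2 : FC a0 a0 (pwl (unmap u)) = FC a0 a0 (pwl (unmap v))) by (rewrite !FC_pwl; exact H).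
      apply FCker in H2. apply pcong_gcongL in H2. rewrite !wordE_pwl, !mapL_unmap in H2. exact H2.
    + intro H. induction H.
      * reflexivity.
      * symmetry; assumption.
      * etransitivity; eassumption.
      * rewrite !Fw_app. f_equal. unfold Fw; simpl. unfold lettE; destruct b; simpl.
        -- rewrite gmulA, gmulVr, gmul1l. reflexivity.
        -- rewrite gmulA, gmulVl, gmul1l. reflexivity.
      * rewrite !Fw_app. apply nodup_In in H. apply in_map_iff in H. destruct H as [al [Hal _]].
        subst r. assert (E : Fw (relw al) = gone X).
        { unfold relw. rewrite Fw_app, Fw_winv. unfold Fw. rewrite !unmap_mapL, <- !FC_word.
          assert (E2 : FC _ _ (csrc al) = FC _ _ (ctgt al)) by (apply FCker; apply pc_rel).
          rewrite E2. apply gmulVr. }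
        rewrite E, gmul1l. reflexivity.
Qed.
End DirB.

Lemma lsum_nonzero {T} (l : list T) f : lsum l f <> 0 -> exists x, In x l /\ f x <> 0.
Proof.
  intro H. apply NNPP. intro Hn. apply H. apply lsum_zero. intros x Hx.
  apply NNPP. intro Hfx. apply Hn. eauto.
Qed.

Lemma supp_list {T} (z : list (T -> R)) : (forall c, In c z -> fsupp c) ->
  exists L0, forall c, In c z -> forall x, c x <> 0 -> In x L0.
Proof.
  induction z as [|c z IH]; intro H.
  - exists []. intros c [].
  - destruct (H c (or_introl eq_refl)) as [l1 Hl1].
    destruct IH as [L0 HL0]. { intros c' Hc'. apply H. right; auto. }
    exists (l1 ++ L0). intros c' [Hc'|Hc'] x Hx; apply in_or_app; [subst c'|].
    + left; auto.
    + right; eauto.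
Qed.

Lemma dir_b (X : group) (d : Z) : groupoid_deficiencies (Sigma X) d ->
  exists n (R1 : list (word n)), is_presentation X R1 /\ (d <= Z.of_nat n - Z.of_nat (length R1))%Z.
Proof.
  intros [C [_ [[fo [FC [Hfos [Hfoi [FCnil [FCcat [FCsurj FCker]]]]]]]
           [chi [l [[k0 [k1 [H0 [H1 Hchi]]]] [HND [Hall Hd]]]]]]]].
  destruct (Hfos tt) as [a0 _].
  assert (Hv : forall v, v = a0) by (intro v; apply Hfoi; destruct (fo v), (fo a0); reflexivity).
  assert (Hst : forall e : ge C, src e = tgt e) by (intro e; rewrite (Hv (src e)), (Hv (tgt e)); reflexivity).
  pose proof (dimH0_pos C a0 Hv Hst k0 H0) as Hk0.
  destruct H1 as [z [Hzl [Hzc [Hzi Hzs]]]].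
  destruct (supp_list z) as [L0 HL0].
  { intros c Hc. destruct (Hzc c Hc) as [Hf _]. exact Hf. }
  assert (HinL0 : forall e, In e L0).
  { intro e. set (ie := fun e' : ge C => Defs.ind (e' = e)).
    assert (Hie : is_cycle ie).
    { apply cycle_of_fsupp; auto. exists [e]. intros x Hx. unfold ie, Defs.ind in Hx.
      destruct (excluded_middle_informative (x = e)); [left; auto| exfalso; apply Hx; reflexivity]. }
    destruct (Hzs ie Hie) as [lam Hlam]. specialize (Hlam e).
    assert (Hie1 : ie e = 1).
    { unfold ie, Defs.ind; destruct (excluded_middle_informative (e = e)); [reflexivity| exfalso; auto]. }
    unfold lincomb in Hlam.
    destruct (lsum_nonzero (List.seq 0 (length z)) (fun i => lam i * nth i z (fun _ => 0) e)) as [i [Hi Hne]].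
    { rewrite <- Hlam, Hie1. lra. }
    apply in_seq in Hi. apply (HL0 (nth i z (fun _ => 0))).
    - apply nth_In; lia.
    - intro Hz. apply Hne. rewrite Hz. ring. }
  set (L := nodup decE L0).
  assert (L_nd : NoDup L) by apply NoDup_nodup.
  assert (L_all : forall e, In e L) by (intro e; apply nodup_In; apply HinL0).
  assert (Hk1 : (k1 <= length L)%nat).
  { apply (LA.indep_le k1 (length L) (fun i j => nth j (List.map (nth i z (fun _ => 0)) L) 0)).
    intros lam Hlam i Hi. apply (Hzi lam); [|exact Hi].
    intro x. destruct (In_nth L x x (L_all x)) as [j [Hj Hjx]].
    pose proof (Hlam j Hj) as E. change R0 with 0 in E. rewrite <- E. unfold lincomb. rewrite Hzl. apply lsum_ext. intros i' Hi'.
    f_equal. rewrite (nth_indep _ _ (nth i' z (fun _ => 0) x)) by (rewrite length_map; auto).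
    rewrite map_nth, Hjx. reflexivity. }
  exists (nL C L), (R1 C L L_all l). split.
  - exact (presB X C fo FC Hfoi FCnil FCcat FCker FCsurj a0 L L_nd L_all l Hall).
  - assert (Hl : (length (R1 C L L_all l) <= length l)%nat) by apply R1_length.
    assert (HnL : nL C L = length L) by reflexivity.
    revert Hl. generalize (length (R1 C L L_all l)). intros m Hm. rewrite HnL. lia.
Qed.

Close Scope R_scope.

Theorem mainTheorem13 (X : group) :
  finitely_presented X ->
  exists d : Z,
    IsGreatest (classical_deficiencies X) d /\
    IsGreatest (groupoid_deficiencies (Sigma X)) d.
Proof.
  intros [n0 [R0 HP0]].
  destruct (Z_max (classical_deficiencies X) (Z.of_nat n0) (Z.of_nat n0 - Z.of_nat (length R0))) as [D [HD HDmax]].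
  - exists n0, R0. auto.
  - intros d [n [R1 [HP Hd]]]. pose proof (class_bound X n0 R0 n R1 HP0 HP). lia.
  - exists D. split. split; auto. split.
    + destruct HD as [n [R1 [HP Hd]]]. subst D. apply dir_a. exact HP.
    + intros d Hd. destruct (dir_b X d Hd) as [n [R1 [HP Hle]]].
      assert (Hc : classical_deficiencies X (Z.of_nat n - Z.of_nat (length R1))) by (exists n, R1; auto).
      specialize (HDmax _ Hc). lia.
Qed.
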